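(* Let $R$ be a finite commutative local principal ideal ring with unity. Then the complement $\overline{\Gamma(R)}$ of the zero divisor graph of $R$ is a divisor graph.
   Context: For a commutative ring $S$ with unity, $Z(S)$ denotes its set of zero divisors. The zero divisor graph $\Gamma(S)$ is the simple graph whose vertex set is $Z(S)\setminus\{0\}$, two distinct vertices $a,b$ being adjacent iff $ab=0$. Its complement $\overline{\Gamma(S)}$ has the same vertex set, two distinct vertices $a,b$ being adjacent iff $ab\neq 0$. For a nonempty set $S$ of positive integers, the divisor graph $G(S)$ has vertex set $S$, with distinct $i,j$ adjacent iff $i\mid j$ or $j\mid i$. A graph is a divisor graph if it is isomorphic to $G(S)$ for some nonempty set $S$ of positive integers. A ring is local if it has a unique maximal ideal. *)

(* Defs.v *)
From HB Require Import structures.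
From mathcomp Require Import all_boot all_order all_algebra.
Set Implicit Arguments. Unset Strict Implicit. Unset Printing Implicit Defensive.
Import GRing.Theory.
Local Open Scope ring_scope.

Section RingDefs.
Variable R : finComNzRingType.

(* An ideal of R (as a finite subset). Closure under r * a with r = -1 gives
   closure under negation, so this is an additive subgroup absorbing products. *)
Definition is_ideal (I : {set R}) : Prop :=
  [/\ 0 \in I,
      (forall a b, a \in I -> b \in I -> a + b \in I) &
      (forall r a, a \in I -> r * a \in I)].

Definition is_maximal_ideal (M : {set R}) : Prop :=
  [/\ is_ideal M, M != [set: R] &
      (forall J : {set R}, is_ideal J -> M \subset J -> J != [set: R] -> J = M)].

Definition is_local_ring : Prop :=
  exists M : {set R}, is_maximal_ideal M /\
    forall N : {set R}, is_maximal_ideal N -> N = M.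

Definition principal_ideal (a : R) : {set R} := [set r * a | r : R].

Definition is_PIR : Prop :=
  forall I : {set R}, is_ideal I -> exists a : R, I = principal_ideal a.

Definition zero_divisors : {set R} :=
  [set a : R | [exists b : R, (b != 0) && (a * b == 0)]].

Definition zdg_vertices : {set R} := zero_divisors :\ 0.

Definition compl_zdg_adj : rel R := fun a b => (a != b) && (a * b != 0).
End RingDefs.

(* A graph with finite vertex set V and adjacency adj is a divisor graph iff it
   is isomorphic to G(S) for a set S of positive integers: an isomorphism is an
   injective map f : V -> positive integers (S := f @: V), such that distinct
   x, y are adjacent iff f x | f y or f y | f x. *)
Definition is_divisor_graph (T : finType) (V : {set T}) (adj : rel T) : Prop :=
  exists f : T -> nat,
    [/\ {in V &, injective f},
        (forall x, x \in V -> (0 < f x)%N) &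
        (forall x y, x \in V -> y \in V -> x != y ->
           (adj x y <-> ((f x %| f y) || (f y %| f x))%N))].

(* Main.v *)
Require Import Defs.
From HB Require Import structures.
From mathcomp Require Import all_boot all_order all_algebra.
From mathcomp Require Import zify.
From Stdlib Require Import Classical.
Set Implicit Arguments. Unset Strict Implicit. Unset Printing Implicit Defensive.
Import GRing.Theory.
Local Open Scope ring_scope.

Section Ring.
Variable R : finComNzRingType.

Definition isu (x : R) := exists v, v * x = 1.

Lemma mem_principal (a x : R) : x \in principal_ideal a <-> exists r, x = r * a.
Proof.
split; first by move=> /imsetP[r _ ->]; exists r.
by move=> [r ->]; apply/imsetP; exists r.
Qed.

Lemma principal_ideal_ideal (a : R) : is_ideal (principal_ideal a).
Proof.
split.
- by apply/mem_principal; exists 0; rewrite mul0r.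
- move=> x y /mem_principal[r ->] /mem_principal[s ->]; apply/mem_principal.
  by exists (r + s); rewrite mulrDl.
- move=> r x /mem_principal[s ->]; apply/mem_principal.
  by exists (r * s); rewrite mulrA.
Qed.

Lemma ideal_unit (I : {set R}) u : is_ideal I -> u \in I -> isu u -> I = setT.
Proof.
move=> [_ _ hm] hu [v hv]; apply/setP => r; rewrite inE.
have -> : r = (r * v) * u by rewrite -mulrA hv mulr1.
exact: hm.
Qed.

Lemma max_exists_aux k : forall I : {set R},
  (#|[set: R]| - #|I| <= k)%N -> is_ideal I -> I != setT ->
  exists M, is_maximal_ideal M /\ I \subset M.
Proof.
elim: k => [|k IH] I hk hI hT.
- exfalso; move/negP: hT; apply.
  rewrite eqEcard subsetT /=; by move: hk; rewrite leqn0 subn_eq0 =>->.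
- case: (classic (is_maximal_ideal I)) => [hM|hM]; first by exists I; split.
  have [J [hJ hIJ hJT hJI]] : exists J, [/\ is_ideal J, I \subset J, J != setT & J != I].
  { apply: NNPP => hn; apply: hM; split => // J hJ hIJ hJT.
    apply: NNPP => hne; apply: hn; exists J; split => //; exact/eqP. }
  have hlt : (#|I| < #|J|)%N by apply: proper_card; rewrite properEneq eq_sym hJI.
  have hJc : (#|J| <= #|[set: R]|)%N by apply: subset_leq_card; apply: subsetT.
  have [M [hM' hJM]] := IH J ltac:(lia) hJ hJT.
  by exists M; split => //; apply: subset_trans hIJ hJM.
Qed.

Lemma max_exists (I : {set R}) : is_ideal I -> I != setT ->
  exists M, is_maximal_ideal M /\ I \subset M.
Proof. by apply: (@max_exists_aux #|[set: R]|); rewrite leq_subr. Qed.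

Lemma comparable (a b : R) : is_local_ring R -> is_PIR R ->
  (exists r, b = r * a) \/ (exists r, a = r * b).
Proof.
move=> [M [hM huniq]] hPIR.
have [[M0 Madd Mmul] MT _] := hM.
have nonunitM : forall x, ~ isu x -> x \in M.
{ move=> x hx.
  have hT : principal_ideal x != setT.
  { apply/negP => /eqP hT; apply: hx.
    have : (1 : R) \in principal_ideal x by rewrite hT inE.
    by move=> /mem_principal[r hr]; exists r. }
  have [N [hN hxN]] := max_exists (principal_ideal_ideal x) hT.
  rewrite -(huniq N hN); apply: (subsetP hxN); apply/mem_principal.
  by exists 1; rewrite mul1r. }
have unitM : forall x, isu x -> x \notin M.
{ move=> x hx; apply/negP => hxM; move/negP: MT; apply.
  by apply/eqP; apply: (ideal_unit _ hxM hx). }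
pose I := [set r * a + s * b | r : R, s : R].
have memI : forall z, z \in I <-> exists r s, z = r * a + s * b.
{ move=> z; split; first by move=> /imset2P[r s _ _ ->]; exists r, s.
  by move=> [r [s ->]]; apply/imset2P; exists r s. }
have hI : is_ideal I.
{ split.
  - by apply/memI; exists 0, 0; rewrite !mul0r addr0.
  - move=> x y /memI[r [s ->]] /memI[r' [s' ->]]; apply/memI.
    exists (r + r'), (s + s'); rewrite !mulrDl.
    by rewrite -!addrA; congr (_ + _); rewrite addrCA.
  - move=> r x /memI[r' [s' ->]]; apply/memI.
    by exists (r * r'), (r * s'); rewrite mulrDr !mulrA. }
have [c hc] := hPIR I hI.
have : a \in I by apply/memI; exists 1, 0; rewrite mul1r mul0r addr0.
rewrite hc => /mem_principal[s hs].
have : b \in I by apply/memI; exists 0, 1; rewrite mul1r mul0r add0r.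
rewrite hc => /mem_principal[t ht].
have : c \in I by rewrite hc; apply/mem_principal; exists 1; rewrite mul1r.
move=> /memI[al [be hcab]].
have hcc : c = (al * s + be * t) * c.
{ by rewrite mulrDl -!mulrA -hs -ht. }
case: (classic (isu (al * s))) => [[v hv]|h1].
{ left; exists (t * (v * al)); rewrite ht -mulrA; congr (_ * _).
  by rewrite hs mulrA -(mulrA v) hv mul1r. }
case: (classic (isu (be * t))) => [[v hv]|h2].
{ right; exists (s * (v * be)); rewrite hs -mulrA; congr (_ * _).
  by rewrite ht mulrA -(mulrA v) hv mul1r. }
have hz : al * s + be * t \in M by apply: Madd; apply: nonunitM.
case: (classic (isu (1 - (al * s + be * t)))) => [[w hw]|h3].
{ right; exists 0; rewrite mul0r hs.
  have -> : c = 0.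
  { have h0 : (1 - (al * s + be * t)) * c = 0.
      by rewrite mulrBl mul1r -hcc subrr.
    by rewrite -[c]mul1r -hw -mulrA h0 mulr0. }
  by rewrite mulr0. }
exfalso.
have h1M : (1 : R) \in M.
{ have -> : (1 : R) = (1 - (al * s + be * t)) + (al * s + be * t) by rewrite subrK.
  by apply: Madd => //; apply: nonunitM. }
by move/negP: (unitM 1 (ex_intro _ 1 (mulr1 1))).
Qed.


Hypothesis hloc : is_local_ring R.
Hypothesis hpir : is_PIR R.

Definition cs (x : R) := #|principal_ideal x|.
Definition NN := #|R|.
Definition rk (x : R) : nat := enum_rank x.

Lemma rk_lt x : (rk x < NN)%N.
Proof. exact: ltn_ord. Qed.

Lemma cs_le x : (cs x <= NN)%N.
Proof. exact: max_card. Qed.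

Lemma dv_of_cs (a b : R) : (cs a <= cs b)%N -> exists r, a = r * b.
Proof.
move=> hab; case: (comparable a b hloc hpir) => [[r hr]|//].
have hsub : principal_ideal b \subset principal_ideal a.
{ apply/subsetP => y /mem_principal[s ->]; apply/mem_principal.
  by exists (s * r); rewrite hr mulrA. }
have /eqP heq : principal_ideal b == principal_ideal a by rewrite eqEcard hsub.
have : a \in principal_ideal a by apply/mem_principal; exists 1; rewrite mul1r.
by rewrite -heq => /mem_principal.
Qed.

Lemma mono (x x' y : R) : x * y != 0 -> (cs x <= cs x')%N -> x' * y != 0.
Proof.
move=> hxy /dv_of_cs[r hr]; apply: contra hxy => /eqP h.
by rewrite hr -mulrA h mulr0.
Qed.

Definition low (x : R) := x * x != 0.

Lemma lowlow x y : low x -> low y -> x * y != 0.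
Proof.
rewrite /low => hx hy.
case: (comparable x y hloc hpir) => [[r hr]|[r hr]].
- apply: contra hy => /eqP h; by rewrite {1}hr -mulrA h mulr0.
- apply: contra hx => /eqP h; by rewrite {2}hr mulrCA h mulr0.
Qed.

Lemma highhigh x y : ~~ low x -> ~~ low y -> x * y = 0.
Proof.
rewrite /low !negbK => /eqP hx /eqP hy.
case: (comparable x y hloc hpir) => [[r hr]|[r hr]].
- by rewrite hr mulrA (mulrC x r) -mulrA hx mulr0.
- by rewrite hr -mulrA hy mulr0.
Qed.

Definition gg (x : R) : nat := (NN * (NN - cs x) + rk x)%N.

Lemma gg_mono x x' : (gg x <= gg x')%N -> (cs x' <= cs x)%N.
Proof.
rewrite /gg => h.
have := rk_lt x; have := rk_lt x'; have := cs_le x; have := cs_le x'.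
move=> h1 h2 h3 h4.
have : (NN - cs x <= NN - cs x')%N by nia.
lia.
Qed.

Lemma gg_inj x y : gg x = gg y -> x = y.
Proof.
move=> h.
have e1 := gg_mono (eq_leq h); have e2 := gg_mono (eq_leq (esym h)).
have ecs : cs x = cs y by apply/eqP; rewrite eqn_leq e1 e2.
move: h; rewrite /gg ecs => /addnI hr.
by apply: enum_rank_inj; apply: ord_inj.
Qed.

Definition tmax (y : R) : nat := \max_(x | low x && (x * y != 0)%R) (gg x).+1.

Lemma tt_spec x y : low x -> ((gg x).+1 <= tmax y)%N = (x * y != 0).
Proof.
move=> hx; apply/idP/idP.
- move=> h; apply/eqP => hxy0; move: h; rewrite leqNgt => /negP; apply.
  rewrite ltnS; apply/bigmax_leqP => x' /andP[hl' hx'y].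
  rewrite ltnNge; apply/negP => hle.
  by move: (mono hx'y (gg_mono hle)); rewrite hxy0 eqxx.
- move=> h. have hP : (low x && (x * y != 0)) by rewrite hx h. exact: (@leq_bigmax_cond _ _ (fun x => (gg x).+1) x hP).
Qed.

End Ring.

Definition PP (e i j : nat) : nat := (2 ^ e * (3 ^ i * 5 ^ j))%N.

Lemma PP_gt0 e i j : (0 < PP e i j)%N.
Proof. by rewrite /PP !muln_gt0 !expn_gt0. Qed.

Lemma logPP e i j :
  [/\ logn 2 (PP e i j) = e, logn 3 (PP e i j) = i & logn 5 (PP e i j) = j].
Proof.
rewrite /PP !lognM ?muln_gt0 ?expn_gt0 // !lognX.
have -> : logn 2 2 = 1%N by [].
have -> : logn 2 3 = 0%N by [].
have -> : logn 2 5 = 0%N by [].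
have -> : logn 3 2 = 0%N by [].
have -> : logn 3 3 = 1%N by [].
have -> : logn 3 5 = 0%N by [].
have -> : logn 5 2 = 0%N by [].
have -> : logn 5 3 = 0%N by [].
have -> : logn 5 5 = 1%N by [].
by rewrite !muln0 !muln1 !addn0 add0n.
Qed.

Lemma divPP e i j e' i' j' :
  (PP e i j %| PP e' i' j')%N = [&& (e <= e')%N, (i <= i')%N & (j <= j')%N].
Proof.
apply/idP/idP.
- move=> h.
  have [a1 a2 a3] := logPP e i j; have [b1 b2 b3] := logPP e' i' j'.
  have l2 := dvdn_leq_log 2 (PP_gt0 e' i' j') h.
  have l3 := dvdn_leq_log 3 (PP_gt0 e' i' j') h.
  have l5 := dvdn_leq_log 5 (PP_gt0 e' i' j') h.
  by rewrite a1 b1 in l2; rewrite a2 b2 in l3; rewrite a3 b3 in l5; rewrite l2 l3 l5.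
- move=> /and3P[h1 h2 h3].
  by rewrite /PP; apply: dvdn_mul; [exact: dvdn_exp2l | apply: dvdn_mul; exact: dvdn_exp2l].
Qed.

Lemma injPP e i j e' i' j' : PP e i j = PP e' i' j' -> [/\ e = e', i = i' & j = j'].
Proof.
move=> h; have [a1 a2 a3] := logPP e i j; have [b1 b2 b3] := logPP e' i' j'.
by split; [rewrite -a1 -b1 h | rewrite -a2 -b2 h | rewrite -a3 -b3 h].
Qed.

Theorem theorem2p1 (R : finComNzRingType) :
  is_local_ring R -> is_PIR R ->
  is_divisor_graph (zdg_vertices R) (@compl_zdg_adj R).
Proof.
move=> hloc hpir.
pose E (x : R) := if low x then (gg x).+1 else tmax x.
pose I3 (x : R) := if low x then 0%N else rk x.
pose J3 (x : R) := if low x then 0%N else (NN R - rk x)%N.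
exists (fun x : R => PP (E x) (I3 x) (J3 x)); split.
- move=> x y _ _ /injPP; rewrite /E /I3 /J3.
  have := rk_lt x; have := rk_lt y.
  case: (boolP (low x)); case: (boolP (low y)) => hy hx ly lx [h1 h2 h3].
  + by apply: gg_inj; case: h1.
  + lia.
  + lia.
  + by apply: enum_rank_inj; apply: ord_inj.
- by move=> x _; apply: PP_gt0.
- move=> x y _ _ hxy; rewrite /compl_zdg_adj hxy /= !divPP /E /I3 /J3.
  have := rk_lt x; have := rk_lt y.
  case: (boolP (low x)); case: (boolP (low y)) => hy hx ly lx.
  + rewrite lowlow // !leqnn !andbT !ltnS leq_total; done.
  + rewrite -(tt_spec hloc hpir y hx).
    have -> : (NN R - rk y <= 0)%N = false by apply/negbTE; rewrite -ltnNge subn_gt0.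
    by rewrite !leq0n !andbT !andbF orbF.
  + rewrite mulrC -(tt_spec hloc hpir x hy).
    have -> : (NN R - rk x <= 0)%N = false by apply/negbTE; rewrite -ltnNge subn_gt0.
    by rewrite !leq0n !andbT !andbF orFb.
  + rewrite (highhigh hloc hpir hx hy) eqxx; split => //.
    move=> /orP[/and3P[_ a b]|/and3P[_ a b]]; exfalso; move/negP: hxy; apply; apply/eqP;
      apply: enum_rank_inj; apply: ord_inj; rewrite /rk in lx ly a b *; lia.
Qed.
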